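(* For every NFA $\mathcal A$, the relation $P(\sqsubset^{\mathrm{bw}},\subseteq^{\mathrm{fw}})$ is good for pruning on NFA: $\mathcal L(\mathrm{Prune}(\mathcal A,P(\sqsubset^{\mathrm{bw}},\subseteq^{\mathrm{fw}})))=\mathcal L(\mathcal A)$.
   Context: An NFA is $\mathcal A=(\Sigma,Q,I,F,\delta)$, $\delta\subseteq Q\times\Sigma\times Q$, assumed forward and backward complete (every state has, for every symbol, an incoming and an outgoing transition with that symbol); its language is the set of finite words having a finite trace starting in $I$ and ending in $F$. Backward finite-word simulation $\sqsubseteq^{\mathrm{bw}}$: in the game from $(p_0,q_0)$, at round $i$ from $(p_i,q_i)$ Spoiler picks $p_{i+1}\xrightarrow{\sigma_i}p_i$ and Duplicator answers $q_{i+1}\xrightarrow{\sigma_i}q_i$; Duplicator wins the infinite play if $p_i\in I\Rightarrow q_i\in I$ for all $i$; $p\sqsubseteq^{\mathrm{bw}}q$ iff she has a winning strategy; $\sqsubset^{\mathrm{bw}}$ is its strict part. Forward finite trace inclusion: $p\subseteq^{\mathrm{fw}}q$ iff for every finite word $w$, if some $w$-trace from $p$ ends in $F$ then some $w$-trace from $q$ ends in $F$. $\mathrm{Prune}(\mathcal A,P)$ has transition set $\{t\in\delta:\nexists t'\in\delta,(t,t')\in P\}$; $P(R_b,R_f)=\{((p,\sigma,r),(p',\sigma,r'))\in\delta\times\delta:p\,R_b\,p',\ r\,R_f\,r'\}$. *)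

(* Defs.v *)
From mathcomp Require Import all_boot.
Set Implicit Arguments. Unset Strict Implicit. Unset Printing Implicit Defensive.

Record NFA (Sigma Q : finType) := mkNFA {
  init  : Q -> Prop;
  final : Q -> Prop;
  trans : Q -> Sigma -> Q -> Prop
}.

Definition fw_complete (Sigma Q : finType) (A : NFA Sigma Q) : Prop :=
  forall (p : Q) (a : Sigma), exists r, trans A p a r.
Definition bw_complete (Sigma Q : finType) (A : NFA Sigma Q) : Prop :=
  forall (p : Q) (a : Sigma), exists r, trans A r a p.

Fixpoint accepts_from (Sigma Q : finType) (A : NFA Sigma Q) (p : Q) (w : seq Sigma)
  : Prop :=
  match w with
  | [::] => final A p
  | a :: w' => exists r, trans A p a r /\ accepts_from A r w'
  end.

Definition lang (Sigma Q : finType) (A : NFA Sigma Q) (w : seq Sigma) : Prop :=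
  exists p, init A p /\ accepts_from A p w.

(* A Duplicator strategy maps
   the history of Spoiler's moves [(sigma_0,p_1);...;(sigma_i,p_{i+1})] to her
   answer q_{i+1}.  Spoiler plays an infinite backward path p_0 <-sigma_0- p_1 <- ...;
   Duplicator wins if all her moves are legal transitions and p_i \in I -> q_i \in I
   for all i. *)
Definition dup_positions (Sigma Q : finType) (q0 : Q) (str : seq (Sigma * Q) -> Q)
  (sg : nat -> Sigma) (ps : nat -> Q) (i : nat) : Q :=
  match i with
  | 0 => q0
  | k.+1 => str (mkseq (fun j => (sg j, ps j.+1)) k.+1)
  end.

Definition bw_sim (Sigma Q : finType) (A : NFA Sigma Q) (p0 q0 : Q) : Prop :=
  exists str : seq (Sigma * Q) -> Q,
    forall (sg : nat -> Sigma) (ps : nat -> Q),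
      ps 0 = p0 ->
      (forall i, trans A (ps i.+1) (sg i) (ps i)) ->
      forall i,
        trans A (dup_positions q0 str sg ps i.+1) (sg i) (dup_positions q0 str sg ps i)
        /\ (init A (ps i) -> init A (dup_positions q0 str sg ps i)).

Definition bw_sim_strict (Sigma Q : finType) (A : NFA Sigma Q) (p q : Q) : Prop :=
  bw_sim A p q /\ ~ bw_sim A q p.

Definition fw_incl (Sigma Q : finType) (A : NFA Sigma Q) (p q : Q) : Prop :=
  forall w : seq Sigma, accepts_from A p w -> accepts_from A q w.

Definition P_rel (Sigma Q : finType) (A : NFA Sigma Q) (Rb Rf : Q -> Q -> Prop)
  (t t' : Q * Sigma * Q) : Prop :=
  let: (p, a, r) := t in let: (p', a', r') := t' in
  [/\ trans A p a r, trans A p' a' r', a' = a, Rb p p' & Rf r r'].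

Definition prune (Sigma Q : finType) (A : NFA Sigma Q)
  (P : Q * Sigma * Q -> Q * Sigma * Q -> Prop) : NFA Sigma Q :=
  mkNFA (init A) (final A)
    (fun p a r => trans A p a r /\
       ~ (exists t' : Q * Sigma * Q,
            trans A t'.1.1 t'.1.2 t'.2 /\ P (p, a, r) t')).

(* Main.v *)
Require Import Defs.
From mathcomp Require Import all_boot.
From Stdlib Require Import ClassicalEpsilon.

Section S.
Variables (Sigma Q : finType) (A : NFA Sigma Q).

Lemma mkseqS0 (T : Type) (f : nat -> T) n :
  mkseq f n.+1 = f 0 :: mkseq (fun j => f j.+1) n.
Proof.
elim: n => [|n IH] //. by rewrite mkseqS IH mkseqS.
Qed.

Lemma take_mkseq (T : Type) (f : nat -> T) n m :
  n <= m -> take n (mkseq f m) = mkseq f n.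
Proof.
move=> le; rewrite /mkseq -map_take take_iota.
by rewrite (minn_idPl le).
Qed.

Lemma play_exists (a : Sigma) (x : Q) : bw_complete A ->
  exists sg ps, ps 0 = x /\ forall i, trans A (ps i.+1) (sg i : Sigma) (ps i).
Proof.
move=> Hb.
pose pr (y : Q) := proj1_sig (constructive_indefinite_description _ (Hb y a)).
have Hpr : forall y, trans A (pr y) a y.
  by move=> y; rewrite /pr; case: constructive_indefinite_description.
exists (fun _ => a), (fun n => iter n pr x); split => // i.
exact: Hpr.
Qed.

Lemma sim_init (a : Sigma) p q : bw_complete A -> bw_sim A p q -> init A p -> init A q.
Proof.
move=> Hb [str Hs] Hp.
have [sg [ps [H0 Hl]]] := play_exists a p Hb.
have [_ H] := Hs sg ps H0 Hl 0.
by apply: H; rewrite H0.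
Qed.

Lemma sim_step p q p' (a : Sigma) : bw_complete A -> bw_sim A p q -> trans A p' a p ->
  exists q', trans A q' a q /\ bw_sim A p' q'.
Proof.
move=> Hb [str Hs] Ht.
pose q' := str [:: (a, p')].
pose str' h := str ((a, p') :: h).
have comb : forall (sg' : nat -> Sigma) ps', ps' 0 = p' ->
   (forall i, trans A (ps' i.+1) (sg' i) (ps' i)) ->
   let sg'' := fun n => match n with 0 => a | m.+1 => sg' m end in
   let ps'' := fun n => match n with 0 => p | m.+1 => ps' m end in
   (ps'' 0 = p /\ forall i, trans A (ps'' i.+1) (sg'' i) (ps'' i)) /\
   forall m, dup_positions q str sg'' ps'' m.+1 = dup_positions q' str' sg' ps' m.
  move=> sg' ps' H0 Hl /=; split.
    by split => // -[|i] //=; rewrite H0.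
  case=> [|m] /=; first by rewrite /q' /mkseq /= H0.
  by rewrite mkseqS0 /= H0.
have [sg' [ps' [H0 Hl]]] := play_exists a p' Hb.
have [[C0 C1] C2] := comb sg' ps' H0 Hl.
exists q'; split.
  have [T _] := Hs _ _ C0 C1 0.
  by move: T; rewrite C2 /=.
exists str' => sg2 ps2 E0 El i.
have [[D0 D1] D2] := comb sg2 ps2 E0 El.
have [T I] := Hs _ _ D0 D1 i.+1.
by rewrite -!D2.
Qed.

Definition cmp (s1 : seq (Sigma * Q) -> Q) (x : Sigma * Q) (h : seq (Sigma * Q)) :=
  mkseq (fun j => ((nth x h j).1, s1 (take j.+1 h))) (size h).

Lemma sim_trans p q r : bw_sim A p q -> bw_sim A q r -> bw_sim A p r.
Proof.
move=> [s1 H1] [s2 H2].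
pose str (h : seq (Sigma * Q)) := match h with
  | [::] => r
  | x :: _ => s2 (cmp s1 x h) end.
exists str => sg ps E0 El.
pose qs := dup_positions q s1 sg ps.
have Hq := H1 sg ps E0 El.
have Hr := H2 sg qs erefl (fun i => (Hq i).1).
have E : forall i, dup_positions r str sg ps i = dup_positions r s2 sg qs i.
  case=> [|k] //=.
  set h := mkseq _ k.+1.
  have hE : h = (sg 0, ps 1) :: behead h by rewrite /h mkseqS0.
  rewrite {1}hE /= -hE /cmp /h size_mkseq; congr s2.
  apply: (@eq_from_nth _ (sg 0, ps 1)) => [|j]; rewrite !size_mkseq // => lt.
  by rewrite !nth_mkseq // take_mkseq.
move=> i; rewrite !E; have [T I] := Hr i; split => // Hi; apply: I; exact: (Hq i).2 Hi.
Qed.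


Fixpoint reachr (ur : seq Sigma) (q : Q) : Prop :=
  match ur with
  | [::] => init A q
  | a :: ur' => exists p, reachr ur' p /\ trans A p a q
  end.

Definition le p q := bw_sim A p q \/ p = q.

Lemma le_trans p q r : le p q -> le q r -> le p r.
Proof.
case=> [H|<-] //; case=> [H'|<-]; [left; exact: sim_trans H H' | by left].
Qed.

Lemma reach_sim (a : Sigma) ur p q : bw_complete A -> bw_sim A p q -> reachr ur p -> reachr ur q.
Proof.
move=> Hb; elim: ur p q => [|b ur IH] p q Hs /=; first exact: sim_init a p q Hb Hs.
case=> p' [Hr Ht].
have [q' [Ht' Hs']] := @sim_step p q p' b Hb Hs Ht.
exists q'; split => //; exact: IH Hs' Hr.
Qed.

Lemma reach_le (a : Sigma) ur p q : bw_complete A -> le p q -> reachr ur p -> reachr ur q.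
Proof. move=> Hb [H|<-] //; exact: reach_sim. Qed.

Definition pb (P : Prop) : bool := if excluded_middle_informative P then true else false.
Lemma pbP (P : Prop) : pb P <-> P.
Proof. by rewrite /pb; case: excluded_middle_informative. Qed.

Definition below (y : Q) := [pred s | pb (le s y)].

Lemma exists_max (M : Q -> Prop) x : M x ->
  exists y, [/\ M y, le x y & forall z, M z -> ~ bw_sim_strict A y z].
Proof.
move=> Mx.
suff H : forall n y, #|Q| - #|below y| <= n -> M y -> le x y ->
  exists y', [/\ M y', le x y' & forall z, M z -> ~ bw_sim_strict A y' z].
  by apply: (H _ x (leqnn _) Mx); right.
elim=> [|n IH] y Hn My Hxy.
- exists y; split => // z Mz [S1 S2].
  have : #|below y| < #|below z|.
    apply: proper_card; apply/properP; split.
      apply/subsetP => s; rewrite !inE => /pbP Hs; apply/pbP.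
      apply: le_trans Hs _; by left.
    exists z; first by rewrite inE; apply/pbP; right.
    rewrite inE; apply/negP => /pbP [H|E]; [exact: S2 | by move: S1 S2; rewrite E => S1 S2; exact: S2 S1].
  move=> lt; move: Hn; rewrite leqn0 subn_eq0 => h.
  by have := leq_ltn_trans h (leq_trans lt (max_card _)); rewrite ltnn.
- case: (excluded_middle_informative (exists z, M z /\ bw_sim_strict A y z)).
    case=> z [Mz [S1 S2]].
    apply: (IH z) => //; last by apply: le_trans Hxy _; left.
    have : #|below y| < #|below z|.
      apply: proper_card; apply/properP; split.
        apply/subsetP => s; rewrite !inE => /pbP Hs; apply/pbP.
        apply: le_trans Hs _; by left.
      exists z; first by rewrite inE; apply/pbP; right.
      rewrite inE; apply/negP => /pbP [H|E]; [exact: S2 | by move: S1 S2; rewrite E => S1 S2; exact: S2 S1].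
    move=> lt; move: Hn; rewrite leq_subLR => Hn.
    rewrite leq_subLR; apply: leq_trans Hn _; by rewrite addnS -addSn leq_add2r.
  move=> Hno; exists y; split => // z Mz S; apply: Hno; by exists z.
Qed.


Definition PP := P_rel A (bw_sim_strict A) (fw_incl A).

Lemma accP v x : accepts_from (prune A PP) x v -> accepts_from A x v.
Proof.
elim: v x => [|a v IH] x //= [r [[Ht _] H]]; exists r; split => //; exact: IH.
Qed.

Lemma claim (Hb : bw_complete A) v : forall ur p, reachr ur p -> accepts_from A p v ->
  exists p', [/\ le p p', reachr ur p' & accepts_from (prune A PP) p' v].
Proof.
elim: v => [|a v IH] ur p Hr Hacc.
  by exists p; split => //; right.
pose M x := reachr ur x /\ accepts_from A x (a :: v).
have [y [[Ry [r0 [Ht0 Ha0]]] Hpy Hmax]] := @exists_max M p (conj Hr Hacc).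
have Rr0 : reachr (a :: ur) r0 by exists y.
have [rs [Hle Rrs Accs]] := IH (a :: ur) r0 Rr0 Ha0.
have [q [Hyq Htq]] : exists q, le y q /\ trans A q a rs.
  case: Hle => [Hs|E].
    have [q [T S]] := @sim_step r0 rs y a Hb Hs Ht0.
    by exists q; split => //; left.
  by exists y; split => //; [right | rewrite -E].
have Mq : M q.
  split; first exact: reach_le a ur y q Hb Hyq Ry.
  by exists rs; split => //; apply: accP.
have qmax : forall z, M z -> ~ bw_sim_strict A q z.
  move=> z Mz [S1 S2]; apply: (Hmax z Mz); split.
    case: Hyq => [H|E]; [exact: sim_trans H S1 | by rewrite E].
  move=> Hzy.
  have : le z q by apply: le_trans (or_introl Hzy) Hyq.
  case=> [//|E]; move: S1 S2; rewrite E => S1 S2; exact: S2 S1.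
exists q; split => //; first exact: le_trans Hpy Hyq.
  exact: Mq.1.
exists rs; split => //; split => //.
case=> [[[p' a'] r']] /= [Htr [_ Ht' Ea [S1 S2] Hf]].
apply: (qmax p') => //; split.
  exact: reach_sim a ur q p' Hb S1 Mq.1.
exists r'; split; first by rewrite -Ea.
by apply: Hf; apply: accP.
Qed.

End S.

Theorem theorem5p8 (Sigma Q : finType) (A : NFA Sigma Q) :
  fw_complete A -> bw_complete A ->
  forall w : seq Sigma,
    lang (prune A (P_rel A (bw_sim_strict A) (fw_incl A))) w <-> lang A w.
Proof.
move=> _ Hb w; split.
  case=> p [Hi Ha]; exists p; split => //; exact: accP Ha.
case=> p [Hi Ha].
have [p' [_ Hr Ha']] := @claim Sigma Q A Hb w [::] p Hi Ha.
by exists p'.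
Qed.
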